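(* Let $S$ be a measurement scenario and $g\colon S\to\mathbf 2$ a possibilistic predicate such that at least one possibilistic empirical model on $S$ satisfies $g$. Then there is a possibilistic empirical model $e$ on $S$ such that $g$ is equivalent to $g(e)$, i.e. for every possibilistic empirical model $d$ on $S$: $d$ satisfies $g$ if and only if $d$ satisfies $g(e)$ (equivalently, if and only if $d\le e$).
   Context: Measurement scenarios, $\mathcal E_S(U)=\prod_{x\in U}O_{S,x}$, possibilistic empirical models (families of non-empty subsets $e_\sigma\subseteq\mathcal E_S(\sigma)$, $\sigma\in\Sigma_S$, with $e_\tau=\{s|_\tau:s\in e_\sigma\}$ for $\tau\subseteq\sigma$), their order $d\le e$ iff $d_\sigma\subseteq e_\sigma$ for all $\sigma$, deterministic procedures $f=(\pi_f,\alpha_f)$ (a simplicial relation $\pi_f$ from $\Sigma_T$ to $\Sigma_S$ and maps $\alpha_{f,x}\colon\mathcal E_S(\pi_f(x))\to O_{T,x}$), possibilistic procedures $\bigvee_if_i$ (non-empty finite sets of deterministic procedures) and their action $\mathrm{Emp}_{\mathbb B}$ are as follows: for deterministic $f$, $(\mathrm{Emp}_{\mathbb B}(f)e)_\sigma=\{(\alpha_{f,x}(s|_{\pi_f(x)}))_{x\in\sigma}: s\in e_{\pi_f(\sigma)}\}$, and $\mathrm{Emp}_{\mathbb B}(\bigvee_if_i)e$ is the contextwise union of the $\mathrm{Emp}_{\mathbb B}(f_i)e$. The scenario $\mathbf 2$ has a single measurement $*$ with outcomes $\{0,1\}$. A possibilistic predicate on $S$ is a possibilistic procedure $g\colon S\to\mathbf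 2$; a possibilistic model $e$ satisfies $g$ if $(\mathrm{Emp}_{\mathbb B}(g)e)_{\{*\}}=\{1\}$. Given a possibilistic model $e$ on $S$, the induced predicate is $g(e)=\bigvee_{\sigma\in\Sigma_S}g(e)_\sigma$, where $g(e)_\sigma$ is the deterministic procedure with $\pi( * )=\sigma$ and $\alpha_*\colon\mathcal E_S(\sigma)\to\{0,1\}$ the characteristic function of $e_\sigma$. *)

(* Defs.v *)
From HB Require Import structures.
From mathcomp Require Import all_boot.
From Stdlib Require List.
Set Implicit Arguments. Unset Strict Implicit. Unset Printing Implicit Defensive.

Record scenario := Scenario {
  meas : finType;
  outc : meas -> finType;
  faces : {set {set meas}}
}.

Definition is_scenario (S : scenario) : Prop :=
  (forall sigma tau : {set meas S},
      sigma \in faces S -> tau \subset sigma -> tau \in faces S) /\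
  (forall x : meas S, [set x] \in faces S).

(* Partial sections: an element of E_S(U) is encoded as a dependent function
   that is defined (Some) exactly on U. *)
Definition sect (S : scenario) := {dffun forall x : meas S, option (@outc S x)}.

Definition E (S : scenario) (U : {set meas S}) : {set sect S} :=
  [set s : sect S | [forall x, (s x != None) == (x \in U)]].

Definition restr (S : scenario) (U : {set meas S}) (s : sect S) : sect S :=
  @finfun _ (fun x => option (@outc S x)) (fun x => if x \in U then s x else None).

Definition model (S : scenario) := {set meas S} -> {set sect S}.

Definition is_model (S : scenario) (e : model S) : Prop :=
  forall sigma, sigma \in faces S ->
    [/\ e sigma != set0, e sigma \subset E sigma &
        forall tau : {set meas S}, tau \subset sigma -> e tau = restr tau @: e sigma].

Definition le_model (S : scenario) (d e : model S) : Prop :=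
  forall sigma, sigma \in faces S -> d sigma \subset e sigma.

(* deterministic procedures f : S -> T  (pi_f given by x |-> pi_f(x)) *)
Record dproc (S T : scenario) := DProc {
  dpi : meas T -> {set meas S};
  dalpha : forall x : meas T, sect S -> @outc T x
}.

Definition pimg (S T : scenario) (f : dproc S T) (sigma : {set meas T})
  : {set meas S} := \bigcup_(x in sigma) dpi f x.

Definition is_dproc (S T : scenario) (f : dproc S T) : Prop :=
  forall sigma, sigma \in faces T -> pimg f sigma \in faces S.

Definition empD (S T : scenario) (f : dproc S T) (e : model S) : model T :=
  fun sigma =>
    [set (@finfun _ (fun x => option (@outc T x))
            (fun x => if x \in sigma then Some (dalpha f x (restr (dpi f x) s))
                      else None) : sect T) | s in e (pimg f sigma)].

Definition is_pproc (S T : scenario) (g : seq (dproc S T)) : Prop :=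
  g <> [::] /\ (forall f, List.In f g -> is_dproc f).

Definition empP (S T : scenario) (g : seq (dproc S T)) (e : model S) : model T :=
  fun sigma => \bigcup_(f <- g) empD f e sigma.

(* the scenario 2: one measurement with outcomes {0,1} (0 = false, 1 = true) *)
Definition two : scenario :=
  @Scenario unit (fun _ => bool) [set set0; setT].

Definition one_sect : sect two :=
  @finfun _ (fun x : meas two => option (@outc two x)) (fun _ => Some true).

Definition satisfies (S : scenario) (g : seq (dproc S two)) (d : model S) : Prop :=
  empP g d [set tt] = [set one_sect].

Definition g_of (S : scenario) (e : model S) : seq (dproc S two) :=
  [seq @DProc S two (fun _ => sigma) (fun _ s => s \in e sigma)
  | sigma <- enum (faces S)].

(* Main.v *)
Require Import Defs.
From mathcomp Require Import all_boot.
From Stdlib Require Import ClassicalEpsilon.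
Set Implicit Arguments. Unset Strict Implicit.

Definition pb (P : Prop) : bool := if excluded_middle_informative P then true else false.
Lemma pbP P : reflect P (pb P).
Proof. rewrite /pb; case: excluded_middle_informative => h; by constructor. Qed.

Lemma tt_face : [set tt] \in faces two.
Proof.
have -> : [set tt] = [set: unit] by apply/setP => -[]; rewrite !inE.
by rewrite /= !inE eqxx orbT.
Qed.

Lemma pimg_tt S (f : dproc S two) : pimg f [set tt] = dpi f tt.
Proof. by rewrite /pimg big_set1. Qed.

Definition outs S (f : dproc S two) (s : sect S) : sect two :=
  @finfun _ (fun x => option (@outc two x))
   (fun x => if x \in [set tt] then Some (dalpha f x (restr (dpi f x) s)) else None).

Lemma outs_one S (f : dproc S two) s : (outs f s == one_sect) = dalpha f tt (restr (dpi f tt) s).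
Proof.
apply/eqP/idP.
- move/(congr1 (fun h : sect two => h tt)); rewrite !ffunE inE eqxx; by case.
- move=> H; apply/ffunP => -[]; by rewrite !ffunE inE eqxx H.
Qed.

Lemma empD_tt S (f : dproc S two) d : empD f d [set tt] = [set outs f s | s in d (dpi f tt)].
Proof. by rewrite /empD pimg_tt. Qed.

Lemma sat_iff S (h : seq (dproc S two)) (d : model S) :
  h <> [::] -> (forall f, List.In f h -> d (dpi f tt) != set0) ->
  (satisfies h d <-> forall f, List.In f h -> forall s, s \in d (dpi f tt) ->
        dalpha f tt (restr (dpi f tt) s)).
Proof.
move=> hne hnz; rewrite /satisfies /empP.
have sub : (\bigcup_(f <- h) empD f d [set tt] \subset [set one_sect]) <->
   (forall f, List.In f h -> forall s, s \in d (dpi f tt) -> dalpha f tt (restr (dpi f tt) s)).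
  elim: h {hne hnz} => [|a h IH]; first by rewrite big_nil sub0set.
  rewrite big_cons subUset; split.
  - case/andP => H1 H2 f [<-|Hf] s Hs.
    + rewrite -outs_one -in_set1; apply: (subsetP H1); rewrite empD_tt; exact: imset_f.
    + exact: (proj1 IH H2).
  - move=> H; apply/andP; split; last by apply/IH => f Hf; apply: H; right.
    apply/subsetP => x; rewrite empD_tt => /imsetP [s Hs ->].
    by rewrite inE outs_one; apply: H => //; left.
split.
- move=> E; apply/sub; by rewrite E.
- move=> H; apply/eqP; rewrite eqEsubset (proj2 sub H) /=.
  case: h hne hnz H {sub} => [//|a h] _ hnz H.
  case/set0Pn: (hnz a (or_introl erefl)) => s Hs.
  rewrite sub1set big_cons inE; apply/orP; left.
  rewrite empD_tt -(eqP (_ : outs a s == one_sect)); first exact: imset_f.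
  by rewrite outs_one; apply: H => //; left.
Qed.
Lemma restrE S (sigma : {set meas S}) (s : sect S) : s \in E sigma -> restr sigma s = s.
Proof.
rewrite inE => /forallP H; apply/ffunP => x; rewrite ffunE.
case: ifP => // hx; move: (H x); rewrite hx; by case: (s x).
Qed.

Lemma In_mem (T : eqType) (x : T) s : List.In x s -> x \in s.
Proof. elim: s => //= a s IH [->|h]; rewrite inE ?eqxx //; by rewrite IH ?orbT. Qed.

Lemma mem_In (T : eqType) (x : T) s : x \in s -> List.In x s.
Proof. elim: s => //= a s IH; rewrite inE => /orP [/eqP->|h]; [by left|right; exact: IH]. Qed.

Lemma In_map A B (F : A -> B) l y : List.In y (map F l) -> exists x, List.In x l /\ y = F x.
Proof. elim: l => //= a l IH [<-|h]; [by exists a; split; [left|] | ].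
case: (IH h) => x [h1 h2]; exists x; split; [right|]; done. Qed.

Lemma map_In A B (F : A -> B) l x : List.In x l -> List.In (F x) (map F l).
Proof. elim: l => //= a l IH [->|h]; [by left|right; exact: IH]. Qed.

Theorem mainTheorem3 (S : scenario) (g : seq (dproc S two)) :
  is_scenario S -> is_pproc g ->
  (exists d : model S, is_model d /\ satisfies g d) ->
  exists e : model S, is_model e /\
    forall d : model S, is_model d ->
      (satisfies g d <-> satisfies (g_of e) d) /\
      (satisfies g d <-> le_model d e).
Proof.
move=> HS [gne gd] [d0 [m0 s0]].
have gface : forall f, List.In f g -> dpi f tt \in faces S.
  move=> f Hf; rewrite -pimg_tt; exact: (gd f Hf _ tt_face).
have nzg : forall d : model S, is_model d -> forall f, List.In f g -> d (dpi f tt) != set0.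
  move=> d md f Hf; by case: (md _ (gface f Hf)).
set e : model S := fun sigma =>
  [set s | pb (exists d, is_model d /\ satisfies g d /\ s \in d sigma)].
have eP : forall sigma s, s \in e sigma <->
   exists d, is_model d /\ satisfies g d /\ s \in d sigma.
  by move=> sigma s; rewrite inE; split => /pbP.
have em : is_model e.
  move=> sigma hs; split.
  - case: (m0 _ hs) => /set0Pn [s Hs] _ _; apply/set0Pn; exists s.
    apply/eP; by exists d0.
  - apply/subsetP => s /eP [d [md [_ Hs]]]; case: (md _ hs) => _ /subsetP H _; exact: H.
  - move=> tau ht; apply/setP => s; apply/idP/idP.
    + move/eP => [d [md [sd Hs]]]; case: (md _ hs) => _ _ /(_ _ ht) E1.
      move: Hs; rewrite E1 => /imsetP [t Ht ->]; apply: imset_f; apply/eP; by exists d.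
    + move/imsetP => [t /eP [d [md [sd Ht]]] ->]; apply/eP; exists d; do 2 split => //.
      case: (md _ hs) => _ _ /(_ _ ht) ->; exact: imset_f.
have sat_le : forall d : model S, is_model d -> (satisfies g d <-> le_model d e).
  move=> d md; split.
  - move=> sd sigma hs; apply/subsetP => s Hs; apply/eP; by exists d.
  - move=> le; apply/(sat_iff gne (nzg d md)) => f Hf s Hs.
    have /eP [d' [md' [sd' Hs']]] : s \in e (dpi f tt) by apply: (subsetP (le _ (gface f Hf))).
    exact: (proj1 (sat_iff gne (nzg d' md')) sd' f Hf s Hs').
exists e; split => // d md; split; last exact: sat_le.
rewrite sat_le //.
have [f0 f0face] : exists f0 : dproc S two, dpi f0 tt \in faces S.
  case Hg: g gne gface => [//|f0 g'] _ gf; exists f0; apply: gf; by left.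
have hne : g_of e <> [::].
  rewrite /g_of; have : dpi f0 tt \in enum (faces S) by rewrite mem_enum.
  by case: (enum (faces S)).
have hIn : forall f, List.In f (g_of e) -> exists sigma, sigma \in faces S /\
    f = @DProc S two (fun _ => sigma) (fun _ s => s \in e sigma).
  move=> f Hf; have [sigma [h1 h2]] := In_map Hf; exists sigma; split => //.
  by rewrite -mem_enum; apply: In_mem.
have hnz : forall f, List.In f (g_of e) -> d (dpi f tt) != set0.
  move=> f /hIn [sigma [hs ->]] /=; by case: (md _ hs).
rewrite (sat_iff hne hnz); split.
- move=> le f /hIn [sigma [hs ->]] s /= Hs.
  case: (md _ hs) => _ /subsetP sE _; rewrite restrE ?sE //.
  exact: (subsetP (le _ hs)).
- move=> H sigma hs; apply/subsetP => s Hs.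
  have := H _ (map_In (fun sigma => @DProc S two (fun _ => sigma) (fun _ s => s \in e sigma))
                 (mem_In (_ : sigma \in enum (faces S)))) s.
  rewrite /= => /(_ _ Hs); case: (md _ hs) => _ /subsetP sE _; rewrite restrE ?sE //.
  apply; rewrite mem_enum //.
Qed.
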